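(* Let $n\ge4$ be even and let $K$ be an algebraically closed field of characteristic different from $2$. Then $P(\mathbb D_n)\cong P^*(\mathbb D_n)$ over $K$.
   Context: Paths in a quiver are composed from left to right: for arrows $\alpha: i\to j$ and $\beta: j\to k$, $\alpha\beta$ is the path $i\to j\to k$. The quiver $Q_{\mathbb D_n}$ has vertices $0,\dots,n-1$ and arrows $a_0:0\to2$, $\bar a_0:2\to0$, $a_1:1\to2$, $\bar a_1:2\to1$, $a_i:i\to i+1$, $\bar a_i:i+1\to i$ ($2\le i\le n-2$); put $\bar{\bar a}=a$. The preprojective algebra is $P(\mathbb D_n)=KQ_{\mathbb D_n}/I$, where $I$ is generated by $\sum_{a\text{ starting at }v}a\bar a$ for all vertices $v$. With $n=2m$, $P^*(\mathbb D_n)=KQ_{\mathbb D_n}/I^*$, where $I^*$ is generated by $\sum_{a\text{ starting at }v}a\bar a$ for all vertices $v\neq2$, together with $\bar a_0a_0+\bar a_1a_1+a_2\bar a_2+(\bar a_0a_0\bar a_1a_1)^{m-1}$ and $(\bar a_0a_0+\bar a_1a_1)^{n-2}$. *)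

(* Defs.v *)
From HB Require Import structures.
From Stdlib Require Lists.List.
From mathcomp Require Import all_boot all_order all_algebra.
Set Implicit Arguments. Unset Strict Implicit. Unset Printing Implicit Defensive.
Import GRing.Theory.
Local Open Scope ring_scope.

(* Finitely presented unital associative K-algebras, encoded syntactically.  *)
(* A presentation is a type of generators G and a list of relators           *)
(* (terms that are set to 0).  The presented algebra is the type of terms    *)
(* modulo the congruence [eqv R] generated by the K-algebra axioms and the   *)
(* relators R.                                                               *)

Inductive term (K : Type) (G : Type) : Type :=
  | Gen of G
  | Zero
  | One
  | Add of term K G & term K G
  | Mul of term K G & term K G
  | Scale of K & term K G.

Arguments Zero {K G}.
Arguments One {K G}.
Arguments Gen {K G}.

Section Terms.
Variable K : fieldType.

Definition tsub (G : Type) (x y : term K G) : term K G := Add x (Scale (-1) y).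

Fixpoint tpow (G : Type) (x : term K G) (k : nat) : term K G :=
  match k with 0 => One | k'.+1 => Mul x (tpow x k') end.

Definition tsum (G : Type) (s : seq (term K G)) : term K G := foldr (@Add K G) Zero s.

Fixpoint subst (G G' : Type) (s : G -> term K G') (t : term K G) : term K G' :=
  match t with
  | Gen g => s g
  | Zero => Zero
  | One => One
  | Add x y => Add (subst s x) (subst s y)
  | Mul x y => Mul (subst s x) (subst s y)
  | Scale c x => Scale c (subst s x)
  end.

Inductive eqv (G : Type) (R : seq (term K G)) : term K G -> term K G -> Prop :=
  | eqv_refl x : eqv R x x
  | eqv_sym x y : eqv R x y -> eqv R y x
  | eqv_trans x y z : eqv R x y -> eqv R y z -> eqv R x z
  | eqv_add x x' y y' : eqv R x x' -> eqv R y y' -> eqv R (Add x y) (Add x' y')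
  | eqv_mul x x' y y' : eqv R x x' -> eqv R y y' -> eqv R (Mul x y) (Mul x' y')
  | eqv_scale c x x' : eqv R x x' -> eqv R (Scale c x) (Scale c x')
  | eqv_addA x y z : eqv R (Add x (Add y z)) (Add (Add x y) z)
  | eqv_addC x y : eqv R (Add x y) (Add y x)
  | eqv_add0 x : eqv R (Add Zero x) x
  | eqv_addN x : eqv R (Add x (Scale (-1) x)) Zero
  | eqv_mulA x y z : eqv R (Mul x (Mul y z)) (Mul (Mul x y) z)
  | eqv_mul1l x : eqv R (Mul One x) x
  | eqv_mul1r x : eqv R (Mul x One) x
  | eqv_mulDl x y z : eqv R (Mul (Add x y) z) (Add (Mul x z) (Mul y z))
  | eqv_mulDr x y z : eqv R (Mul x (Add y z)) (Add (Mul x y) (Mul x z))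
  | eqv_scaleA c d x : eqv R (Scale c (Scale d x)) (Scale (c * d) x)
  | eqv_scale1 x : eqv R (Scale 1 x) x
  | eqv_scaleDr c x y : eqv R (Scale c (Add x y)) (Add (Scale c x) (Scale c y))
  | eqv_scaleDl c d x : eqv R (Scale (c + d) x) (Add (Scale c x) (Scale d x))
  | eqv_scaleMl c x y : eqv R (Scale c (Mul x y)) (Mul (Scale c x) y)
  | eqv_scaleMr c x y : eqv R (Scale c (Mul x y)) (Mul x (Scale c y))
  | eqv_rel r : Stdlib.Lists.List.In r R -> eqv R r Zero.

(* K<G>/(R1) and K<G>/(R2) are isomorphic as K-algebras: there are K-algebra  *)
(* homomorphisms in both directions (given on generators, well defined since  *)
(* they kill the relators) that are mutually inverse.                         *)
Definition pres_iso (G : Type) (R1 R2 : seq (term K G)) : Prop :=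
  exists (sigma tau : G -> term K G),
    [/\ (forall r, Stdlib.Lists.List.In r R1 -> eqv R2 (subst sigma r) Zero),
        (forall r, Stdlib.Lists.List.In r R2 -> eqv R1 (subst tau r) Zero),
        (forall g, eqv R1 (subst tau (sigma g)) (Gen g))
      & (forall g, eqv R2 (subst sigma (tau g)) (Gen g))].

End Terms.

(* The quiver Q_{D_n}: vertices 0..n-1, arrows a_i, abar_i for i = 0..n-2.  *)
(* Paths compose left to right.                                              *)

Inductive gen (n : nat) : Type :=
  | GE of 'I_n          (* trivial path e_v *)
  | GA of 'I_n.-1
  | GB of 'I_n.-1.

Definition src_a (i : nat) : nat := i.
Definition tgt_a (i : nat) : nat := if (i <= 1)%N then 2%N else i.+1.

Section DQuiver.
Variables (K : fieldType) (n : nat).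
Local Notation T := (term K (gen n)).

Definition Ev (v : nat) : T :=
  match insub v : option 'I_n with Some o => Gen (GE o) | None => Zero end.
Definition Aa (i : nat) : T :=
  match insub i : option 'I_n.-1 with Some o => Gen (GA o) | None => Zero end.
Definition Ab (i : nat) : T :=
  match insub i : option 'I_n.-1 with Some o => Gen (GB o) | None => Zero end.

(* Relations making K<generators>/(rels) the path algebra KQ_{D_n}. *)
Definition quiver_rels : seq T :=
  [seq tsub (Mul (Gen (GE v)) (Gen (GE w)))
            (if v == w then Gen (GE v) else Zero) | v : 'I_n <- enum 'I_n, w : 'I_n <- enum 'I_n]
  ++ [:: tsub (tsum [seq Gen (GE v) | v <- enum 'I_n]) One]
  ++ [seq tsub (Mul (Mul (Ev (src_a i)) (Gen (GA i))) (Ev (tgt_a i))) (Gen (GA i))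
       | i : 'I_n.-1 <- enum 'I_n.-1]
  ++ [seq tsub (Mul (Mul (Ev (tgt_a i)) (Gen (GB i))) (Ev (src_a i))) (Gen (GB i))
       | i : 'I_n.-1 <- enum 'I_n.-1].

Definition mesh (v : nat) : T :=
  tsum [seq Add (if src_a i == v then Mul (Gen (GA i)) (Gen (GB i)) else Zero)
                (if tgt_a i == v then Mul (Gen (GB i)) (Gen (GA i)) else Zero)
       | i : 'I_n.-1 <- enum 'I_n.-1].

Definition P_rels : seq T := quiver_rels ++ [seq mesh v | v <- iota 0 n].

Definition Pstar_rels : seq T :=
  quiver_rels ++ [seq mesh v | v <- iota 0 n & v != 2%N]
  ++ [:: Add (Add (Add (Mul (Ab 0) (Aa 0)) (Mul (Ab 1) (Aa 1))) (Mul (Aa 2) (Ab 2)))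
             (tpow (Mul (Mul (Mul (Ab 0) (Aa 0)) (Ab 1)) (Aa 1)) (n./2 - 1)%N);
         tpow (Add (Mul (Ab 0) (Aa 0)) (Mul (Ab 1) (Aa 1))) (n - 2)%N].

End DQuiver.

(* Main.v *)
Require Import Defs.
From HB Require Import structures.
From mathcomp Require Import all_boot all_order all_algebra.
From mathcomp Require Import zify ring.
From mathcomp Require boolp.
From Stdlib Require Import ClassicalEpsilon PropExtensionality FunctionalExtensionality ProofIrrelevance.
From Stdlib Require Lists.List.
Import Stdlib.Lists.List (In).
Set Implicit Arguments. Unset Strict Implicit. Unset Printing Implicit Defensive.
Import GRing.Theory.
Local Open Scope ring_scope.

Lemma In_map T U (F : T -> U) s r : In r (map F s) -> exists x, In x s /\ r = F x.
Proof.
elim: s => //= x s IH [<-|/IH [y [Hy ->]]]; first by exists x; split; [left|].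
by exists y; split; [right|].
Qed.
Lemma In_map2 T U (F : T -> U) s x : In x s -> In (F x) (map F s).
Proof. by elim: s => //= y s IH [->|/IH]; [left|right]. Qed.
Lemma In_cat T (s1 s2 : seq T) r : In r (s1 ++ s2) <-> In r s1 \/ In r s2.
Proof.
elim: s1 => /= [|x s IH]; first by split; [right|case].
rewrite IH; tauto.
Qed.
Lemma In_allpairs S T U (F : S -> T -> U) s t r :
  In r [seq F x y | x <- s, y <- t] <-> exists x y, [/\ In x s, In y t & r = F x y].
Proof.
elim: s => /= [|x s IH]; first by split => // [[? [? []]]].
rewrite In_cat IH; split.
- case=> [H|[x' [y [H1 H2 ->]]]].
    have [y [Hy ->]] := In_map H.
    by exists x, y; split => //; left.
  by exists x', y; split => //; right.
- case=> x' [y [[<-|H1] H2 ->]]; first by left; apply: In_map2.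
  by right; exists x', y.
Qed.
Lemma In_mem (T : eqType) (x : T) s : In x s <-> x \in s.
Proof.
elim: s => //= y s IH; rewrite in_cons IH; split.
- by case=> [->|->]; rewrite ?eqxx ?orbT.
- by case/orP => [/eqP ->|]; [left|right].
Qed.
Lemma In_filter T (P : pred T) s x : In x (filter P s) -> In x s /\ P x.
Proof.
elim: s => //= y s IH; case: ifP => Py /=.
- by case=> [<-|/IH []]; [split; [left|]|split; [right|]].
- by move=> /IH [? ?]; split; [right|].
Qed.
Lemma In_filter2 T (P : pred T) s x : In x s -> P x -> In x (filter P s).
Proof.
elim: s => //= y s IH [<-|H] Px; first by rewrite Px; left.
by case: ifP => _; [right|]; apply: IH.
Qed.


Definition quot (K : fieldType) (G : Type) (R : seq (term K G)) :=
  {P : term K G -> Prop | exists t, P = eqv R t}.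

HB.instance Definition _ K G R := boolp.gen_eqMixin (@quot K G R).
HB.instance Definition _ K G R := boolp.gen_choiceMixin (@quot K G R).

Section Q.
Variables (K : fieldType) (G : Type) (R : seq (term K G)).
Local Notation Q := (@quot K G R).
Local Notation T := (term K G).

Definition cl (t : T) : Q := exist _ (eqv R t) (ex_intro _ t erefl).

Lemma cl_eq x y : cl x = cl y <-> eqv R x y.
Proof.
split.
- move=> H. have: proj1_sig (cl x) = proj1_sig (cl y) by rewrite H.
  move=> /= E. apply: eqv_sym. have : eqv R x x by apply: eqv_refl.
  by rewrite E.
- move=> H. apply: eq_sig_hprop; first by move=> ? ? ?; apply: proof_irrelevance.
  apply: functional_extensionality => z; apply: propositional_extensionality.
  split => Hz; [apply: eqv_trans (eqv_sym H) Hz | apply: eqv_trans H Hz].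
Qed.

Lemma cl_surj (q : Q) : exists t, q = cl t.
Proof.
case: q => P [t Pt]; exists t; subst P.
apply: eq_sig_hprop; first by move=> ? ? ?; apply: proof_irrelevance. by [].
Qed.

Definition rep (q : Q) : T := proj1_sig (constructive_indefinite_description _ (cl_surj q)).
Lemma repK q : cl (rep q) = q.
Proof. rewrite /rep; case: constructive_indefinite_description => t /= ->. by []. Qed.
Lemma rep_cl t : eqv R (rep (cl t)) t.
Proof. by apply/cl_eq; rewrite repK. Qed.

Definition qzero : Q := cl Zero.
Definition qone : Q := cl One.
Definition qadd (p q : Q) : Q := cl (Add (rep p) (rep q)).
Definition qmul (p q : Q) : Q := cl (Mul (rep p) (rep q)).
Definition qopp (p : Q) : Q := cl (Scale (-1) (rep p)).

Lemma qaddE x y : qadd (cl x) (cl y) = cl (Add x y).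
Proof. apply/cl_eq; apply: eqv_add; apply: rep_cl. Qed.
Lemma qmulE x y : qmul (cl x) (cl y) = cl (Mul x y).
Proof. apply/cl_eq; apply: eqv_mul; apply: rep_cl. Qed.
Lemma qoppE x : qopp (cl x) = cl (Scale (-1) x).
Proof. apply/cl_eq; apply: eqv_scale; apply: rep_cl. Qed.

Ltac qelim := repeat match goal with q : Q |- _ =>
   let t := fresh "t" in have [t ->] := cl_surj q; clear q end.

Lemma qaddA : associative qadd.
Proof. move=> a b c; qelim; rewrite !qaddE; apply/cl_eq; apply: eqv_addA. Qed.
Lemma qaddC : commutative qadd.
Proof. move=> a b; qelim; rewrite !qaddE; apply/cl_eq; apply: eqv_addC. Qed.
Lemma qadd0 : left_id qzero qadd.
Proof. move=> a; qelim; rewrite !qaddE; apply/cl_eq; apply: eqv_add0. Qed.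
Lemma qaddN : left_inverse qzero qopp qadd.
Proof. move=> a; qelim; rewrite qoppE qaddE; apply/cl_eq.
apply: eqv_trans; [apply: eqv_addC | apply: eqv_addN]. Qed.

HB.instance Definition _ := GRing.isZmodule.Build Q qaddA qaddC qadd0 qaddN.

Lemma qmulA : associative qmul.
Proof. move=> a b c; qelim; rewrite !qmulE; apply/cl_eq; apply: eqv_mulA. Qed.
Lemma qmul1 : left_id qone qmul.
Proof. move=> a; qelim; rewrite !qmulE; apply/cl_eq; apply: eqv_mul1l. Qed.
Lemma qmulr1 : right_id qone qmul.
Proof. move=> a; qelim; rewrite !qmulE; apply/cl_eq; apply: eqv_mul1r. Qed.
Lemma qmulDl : left_distributive qmul qadd.
Proof. move=> a b c; qelim; rewrite !(qaddE, qmulE); apply/cl_eq; apply: eqv_mulDl. Qed.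
Lemma qmulDr : right_distributive qmul qadd.
Proof. move=> a b c; qelim; rewrite !(qaddE, qmulE); apply/cl_eq; apply: eqv_mulDr. Qed.

HB.instance Definition _ := GRing.Zmodule_isPzRing.Build Q qmulA qmul1 qmulr1 qmulDl qmulDr.


Definition kc (c : K) : Q := cl (Scale c One).
Lemma cl_add x y : cl (Add x y) = cl x + cl y.
Proof. exact: (esym (qaddE x y)). Qed.
Lemma cl_mul x y : cl (Mul x y) = cl x * cl y.
Proof. exact: (esym (qmulE x y)). Qed.
Lemma cl_zero : cl Zero = 0. Proof. by []. Qed.
Lemma cl_one : cl One = 1. Proof. by []. Qed.
Lemma cl_scale c x : cl (Scale c x) = kc c * cl x.
Proof.
rewrite -cl_mul; apply/cl_eq.
apply: eqv_trans; last by apply: eqv_scaleMl.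
by apply: eqv_scale; apply: eqv_sym; apply: eqv_mul1l.
Qed.
Lemma kcC c q : kc c * q = q * kc c.
Proof.
have [t ->] := cl_surj q; rewrite -!cl_mul; apply/cl_eq.
apply: eqv_trans; first by apply: eqv_sym; apply: eqv_scaleMl.
apply: eqv_trans; last by apply: eqv_scaleMr.
apply: eqv_scale; apply: eqv_trans; [apply: eqv_mul1l|apply: eqv_sym; apply: eqv_mul1r].
Qed.
Lemma kcD c d : kc (c + d) = kc c + kc d.
Proof. by rewrite -cl_add; apply/cl_eq; apply: eqv_scaleDl. Qed.
Lemma kc1 : kc 1 = 1.
Proof. by apply/cl_eq; apply: eqv_scale1. Qed.
Lemma kc0 : kc 0 = 0.
Proof. by apply/eqP; rewrite -(inj_eq (addrI (kc 0))) addr0 -kcD addr0. Qed.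
Lemma kcN c : kc (- c) = - kc c.
Proof. by apply/eqP; rewrite -addr_eq0 -kcD addNr kc0. Qed.
Lemma kcN1 : kc (-1) = -1.
Proof. by rewrite kcN kc1. Qed.
Lemma cl_rel r : Stdlib.Lists.List.In r R -> cl r = 0.
Proof. by move=> H; apply/cl_eq; apply: eqv_rel. Qed.
End Q.
Section Ev.
Variables (K : fieldType) (A : pzRingType) (kc : K -> A).
Fixpoint ev (G : Type) (f : G -> A) (t : term K G) : A :=
  match t with
  | Gen g => f g
  | Zero => 0
  | One => 1
  | Add x y => ev f x + ev f y
  | Mul x y => ev f x * ev f y
  | Scale c x => kc c * ev f x
  end.

Lemma ev_subst G G' (f : G' -> A) (s : G -> term K G') t :
  ev f (subst s t) = ev (fun g => ev f (s g)) t.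
Proof. by elim: t => //= [x -> y ->|x -> y ->|c x ->]. Qed.

Lemma ev_tpow G (f : G -> A) x k : ev f (tpow x k) = ev f x ^+ k.
Proof. by elim: k => [|k IH] //=; rewrite IH exprS. Qed.

Lemma ev_tsum G (f : G -> A) s : ev f (tsum s) = \sum_(x <- s) ev f x.
Proof. by elim: s => [|x s IH]; rewrite ?big_nil ?big_cons //= IH. Qed.

Hypothesis kcN1 : kc (-1) = -1.
Lemma ev_tsub G (f : G -> A) x y : ev f (tsub x y) = ev f x - ev f y.
Proof. by rewrite /= kcN1 mulN1r. Qed.
End Ev.

Lemma cl_ev (K : fieldType) (G : Type) (R : seq (term K G)) t :
  cl R t = ev (kc R) (fun g => cl R (Gen g)) t.
Proof.
elim: t => //= [x <- y <-|x <- y <-|c x <-].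
- exact: cl_add. - exact: cl_mul. - exact: cl_scale.
Qed.


Section Alg.
Variable A : pzRingType.

Lemma commL (X Y : A) k : X * (Y * X) ^+ k = (X * Y) ^+ k * X.
Proof.
elim: k => [|k IH]; first by rewrite !expr0 mulr1 mul1r.
by rewrite exprS mulrA (mulrA X Y X) -mulrA IH mulrA -exprS.
Qed.

Lemma powab (a b : A) k : (a * b) ^+ k.+1 = a * (b * a) ^+ k * b.
Proof. by rewrite commL exprSr mulrA. Qed.

Lemma expand2 (X Y : A) k : X * X = 0 -> Y * Y = 0 ->
  (X + Y) ^+ (k.+1).*2 = (X * Y) ^+ k.+1 + (Y * X) ^+ k.+1.
Proof.
move=> XX YY; elim: k => [|k IH].
  by rewrite expr2 mulrDl !mulrDr XX YY add0r addr0 !expr1.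
rewrite doubleS -addn2 exprD IH.
have -> : (X + Y) ^+ 2 = X * Y + Y * X by rewrite expr2 mulrDl !mulrDr XX YY add0r addr0.
rewrite mulrDl !mulrDr -![(X * Y) ^+ k.+1 * (X * Y)]exprSr -![(Y * X) ^+ k.+1 * (Y * X)]exprSr.
have -> : (X * Y) ^+ k.+1 * (Y * X) = 0 by rewrite exprSr -!mulrA (mulrA Y Y) YY mul0r !mulr0.
have -> : (Y * X) ^+ k.+1 * (X * Y) = 0 by rewrite exprSr -!mulrA (mulrA X X) XX mul0r !mulr0.
by rewrite addr0 add0r.
Qed.

Variables (h : A) (hC : forall z, h * z = z * h) (hh : h + h = 1).
Variables (k : nat) (x y : A).
Hypotheses (xx : x * x = 0) (yy : y * y = 0).
Variables (s p : A).
Hypotheses (sD : s = (x * y) ^+ k.+1) (pD : p = x * (y * x) ^+ k).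
Hypothesis F2 : (x * y) ^+ k.+1 + (y * x) ^+ k.+1 = 0.

Lemma xs : x * s = 0.
Proof. by rewrite sD exprS !mulrA xx !mul0r. Qed.
Lemma sx : s * x = 0.
Proof.
have := congr1 (fun z => x * z) F2; rewrite /= mulr0 mulrDr.
by rewrite -sD xs add0r commL -sD.
Qed.
Lemma ys : y * s = 0.
Proof.
have := congr1 (fun z => y * z) F2; rewrite /= mulr0 mulrDr.
by rewrite [(y * x) ^+ k.+1]exprS !mulrA yy !mul0r addr0 -sD.
Qed.
Lemma sy : s * y = 0.
Proof. by rewrite sD exprSr -!mulrA yy !mulr0. Qed.
Lemma ss : s * s = 0.
Proof. by rewrite {2}sD exprS !mulrA sx !mul0r. Qed.
Lemma pE : p = (x * y) ^+ k * x.
Proof. by rewrite pD commL. Qed.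
Lemma py : p * y = s.
Proof. by rewrite pE -mulrA -exprSr. Qed.
Lemma yp : y * p = - s.
Proof.
rewrite pD mulrA -exprS; apply/eqP; rewrite -addr_eq0 addrC.
by apply/eqP; rewrite sD F2.
Qed.
Lemma pp : p * p = 0.
Proof. by rewrite {1}pE pD -mulrA (mulrA x) xx mul0r mulr0. Qed.
Lemma pyp : p * y * p = 0.
Proof. by rewrite py pD mulrA sx mul0r. Qed.

Variable q : A.
Hypothesis qD : q = h * p.
Variables (a1 b1 : A).
Hypotheses (a1b1 : a1 * b1 = 0) (Ey : b1 * a1 = y).
Lemma hC2 (u v : A) : u * (h * v) = h * (u * v).
Proof. by rewrite mulrA -hC mulrA. Qed.
Lemma qq : q * q = 0.
Proof. by rewrite qD hC2 -mulrA pp !mulr0. Qed.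
Lemma yq : y * q = - (h * s).
Proof. by rewrite qD hC2 yp mulrN. Qed.
Lemma qy : q * y = h * s.
Proof. by rewrite qD -mulrA py. Qed.
Lemma qyq : q * y * q = 0.
Proof. by rewrite qy qD hC2 -mulrA pD (mulrA s x) sx mul0r !mulr0. Qed.

Lemma sig_ab : (a1 - a1 * q) * (b1 + q * b1) = 0.
Proof.
rewrite mulrBl !mulrDr -!mulrA (mulrA q q) qq mul0r mulr0 addr0.
by rewrite a1b1 add0r subrr.
Qed.
Lemma sig_ba : (b1 + q * b1) * (a1 - a1 * q) = y + s.
Proof.
rewrite mulrDl !mulrBr !mulrA Ey.
have -> : q * b1 * a1 * q = q * y * q by rewrite -Ey !mulrA.
have -> : q * b1 * a1 = q * y by rewrite -Ey !mulrA.
rewrite qyq subr0 yq qy opprK -addrA -mulrDl hh mul1r.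
by [].
Qed.
Lemma tau_ab : (a1 + a1 * q) * (b1 - q * b1) = 0.
Proof.
rewrite mulrDl !mulrBr -!mulrA (mulrA q q) qq mul0r mulr0 subr0.
by rewrite a1b1 sub0r addNr.
Qed.
Lemma tau_ba : (b1 - q * b1) * (a1 + a1 * q) = y - s.
Proof.
rewrite mulrBl !mulrDr !mulrA Ey.
have -> : q * b1 * a1 * q = q * y * q by rewrite -Ey !mulrA.
have -> : q * b1 * a1 = q * y by rewrite -Ey !mulrA.
rewrite qyq addr0 yq qy -addrA -opprD -mulrDl hh mul1r.
by [].
Qed.
Lemma sigtau_a : (a1 + a1 * q) - (a1 + a1 * q) * q = a1.
Proof. by rewrite mulrDl -mulrA qq mulr0 addr0 addrK. Qed.
Lemma sigtau_b : (b1 - q * b1) + q * (b1 - q * b1) = b1.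
Proof. by rewrite mulrBr mulrA qq mul0r subr0 subrK. Qed.
Lemma tausig_a : (a1 - a1 * q) + (a1 - a1 * q) * q = a1.
Proof. by rewrite mulrBl -mulrA qq mulr0 subr0 subrK. Qed.
Lemma tausig_b : (b1 + q * b1) - q * (b1 + q * b1) = b1.
Proof. by rewrite mulrDr mulrA qq mul0r addr0 addrK. Qed.

Lemma x_ys : x * (y + s) = x * y.
Proof. by rewrite mulrDr xs addr0. Qed.
Lemma ys_x : (y + s) * x = y * x.
Proof. by rewrite mulrDl sx addr0. Qed.
Lemma x_yt : x * (y - s) = x * y.
Proof. by rewrite mulrBr xs subr0. Qed.
Lemma yt_x : (y - s) * x = y * x.
Proof. by rewrite mulrBl sx subr0. Qed.
Lemma yt2 : (y - s) * (y - s) = 0.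
Proof. by rewrite mulrBl !mulrBr yy ys sy ss !(subr0, sub0r, oppr0). Qed.

End Alg.


Section D.
Variables (K : fieldType) (n : nat) (A : pzRingType) (kc : K -> A).
Hypothesis kcN1 : kc (-1) = -1.
Local Notation T := (term K (gen n)).
Local Notation ev := (ev kc).

Definition Ef (f : gen n -> A) v := ev f (Ev K n v).
Definition Af (f : gen n -> A) i := ev f (Aa K n i).
Definition Bf (f : gen n -> A) i := ev f (Ab K n i).

Lemma Ev_ord (v : 'I_n) : Ev K n v = Gen (GE v).
Proof. by rewrite /Ev valK. Qed.
Lemma Aa_ord (i : 'I_n.-1) : Aa K n i = Gen (GA i).
Proof. by rewrite /Aa valK. Qed.
Lemma Ab_ord (i : 'I_n.-1) : Ab K n i = Gen (GB i).
Proof. by rewrite /Ab valK. Qed.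

Definition quivOK (f : gen n -> A) :=
  [/\ forall v w : 'I_n, f (GE v) * f (GE w) = (if v == w then f (GE v) else 0),
      \sum_(v <- enum 'I_n) f (GE v) = 1,
      forall i : 'I_n.-1, Ef f (src_a i) * f (GA i) * Ef f (tgt_a i) = f (GA i) &
      forall i : 'I_n.-1, Ef f (tgt_a i) * f (GB i) * Ef f (src_a i) = f (GB i)].

Lemma quiv_sound f : quivOK f -> forall r, In r (quiver_rels K n) -> ev f r = 0.
Proof.
case=> Q1 Q2 Q3 Q4 r; rewrite /quiver_rels !In_cat.
case=> [H|[[<-|//]|[H|H]]].
- have [v [w [_ _ ->]]] := proj1 (In_allpairs _ _ _ _) H; rewrite ev_tsub //.
- by rewrite [ev _ (Mul _ _)]/= Q1; case: (v == w); rewrite subrr.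
- by rewrite ev_tsub // ev_tsum big_map Q2 subrr.
- have [i [_ ->]] := In_map H; rewrite ev_tsub //.
  by rewrite [ev _ (Mul _ _)]/= Q3 subrr.
- have [i [_ ->]] := In_map H; rewrite ev_tsub //.
  by rewrite [ev _ (Mul _ _)]/= Q4 subrr.
Qed.

Lemma quiv_complete f : (forall r, In r (quiver_rels K n) -> ev f r = 0) -> quivOK f.
Proof.
rewrite /quiver_rels => H; split.
- move=> v w; apply/eqP; rewrite -subr_eq0.
  have Hin : In (tsub (Mul (Gen (GE v)) (Gen (GE w))) (if v == w then Gen (GE v) else Zero))
     (quiver_rels K n).
    rewrite /quiver_rels In_cat; left; apply/In_allpairs; exists v, w; split => //;
    by apply/In_mem; rewrite mem_enum.
  by move: (H _ Hin); rewrite ev_tsub //; case: (v == w) => /= ->.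
- apply/eqP; rewrite -subr_eq0.
  have Hin : In (tsub (tsum [seq Gen (GE v) | v <- enum 'I_n]) One) (quiver_rels K n).
    by rewrite /quiver_rels In_cat; right; rewrite In_cat; left; left.
  by move: (H _ Hin); rewrite ev_tsub // ev_tsum big_map => /= ->.
- move=> i; apply/eqP; rewrite -subr_eq0.
  have Hin : In (tsub (Mul (Mul (Ev K n (src_a i)) (Gen (GA i))) (Ev K n (tgt_a i))) (Gen (GA i)))
    (quiver_rels K n).
    rewrite /quiver_rels In_cat; right; rewrite In_cat; right; rewrite In_cat; left.
    by apply: (In_map2 (fun i : 'I_n.-1 => _)); apply/In_mem; rewrite mem_enum.
  by move: (H _ Hin); rewrite ev_tsub // => /= ->.
- move=> i; apply/eqP; rewrite -subr_eq0.
  have Hin : In (tsub (Mul (Mul (Ev K n (tgt_a i)) (Gen (GB i))) (Ev K n (src_a i))) (Gen (GB i)))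
    (quiver_rels K n).
    rewrite /quiver_rels In_cat; right; rewrite In_cat; right; rewrite In_cat; right.
    by apply: (In_map2 (fun i : 'I_n.-1 => _)); apply/In_mem; rewrite mem_enum.
  by move: (H _ Hin); rewrite ev_tsub // => /= ->.
Qed.


Definition meshS (a b : nat -> A) (v : nat) : A :=
  \sum_(0 <= j < n.-1) ((if src_a j == v then a j * b j else 0) +
                        (if tgt_a j == v then b j * a j else 0)).

Lemma ev_mesh f v : ev f (mesh K n v) = meshS (Af f) (Bf f) v.
Proof.
rewrite /mesh ev_tsum big_map big_enum /= /meshS big_mkord.
apply: eq_bigr => i _ /=.
by rewrite /Af /Bf Aa_ord Ab_ord; case: (src_a i == v); case: (tgt_a i == v).
Qed.


Lemma meshC (a b a' b' : nat -> A) v : v != 1%N -> v != 2%N ->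
  (forall j, j != 1%N -> a j = a' j) -> (forall j, j != 1%N -> b j = b' j) ->
  meshS a b v = meshS a' b' v.
Proof.
move=> v1 v2 Ha Hb; apply: eq_bigr => j _.
case: (eqVneq j 1%N) => [->|Hj]; last by rewrite Ha // Hb.
by rewrite /src_a /tgt_a /= !(eq_sym _ v) (negbTE v1) (negbTE v2).
Qed.

Hypothesis Hn : (4 <= n)%N.

Lemma mesh_split (F : nat -> A) : \sum_(0 <= j < n.-1) F j =
   F 0%N + (F 1%N + (F 2%N + \sum_(3 <= j < n.-1) F j)).
Proof.
case: n Hn => [|[|[|[|N]]]] // _ /=.
by rewrite big_ltn // big_ltn // big_ltn.
Qed.

Definition msum (a b : nat -> A) (v j : nat) : A :=
  (if src_a j == v then a j * b j else 0) + (if tgt_a j == v then b j * a j else 0).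

Lemma mesh_tail a b v : (v <= 2)%N -> \sum_(3 <= j < n.-1) msum a b v j = 0.
Proof.
move=> Hv; rewrite big_nat_cond big1 // => i /andP [/andP [Hi _] _].
rewrite /msum /src_a /tgt_a.
have -> : (i == v) = false by apply/negbTE; lia.
have -> : (i <= 1)%N = false by apply/negbTE; lia.
have -> : (i.+1 == v) = false by apply/negbTE; lia.
by rewrite addr0.
Qed.

Lemma mesh0 a b : meshS a b 0 = a 0%N * b 0%N.
Proof.
by rewrite /meshS mesh_split (mesh_tail a b (v := 0)) // /msum /src_a /tgt_a /= !(addr0, add0r).
Qed.
Lemma mesh1 a b : meshS a b 1 = a 1%N * b 1%N.
Proof.
by rewrite /meshS mesh_split (mesh_tail a b (v := 1)) // /msum /src_a /tgt_a /= !(addr0, add0r).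
Qed.
Lemma mesh2 a b : meshS a b 2 = b 0%N * a 0%N + b 1%N * a 1%N + a 2%N * b 2%N.
Proof.
by rewrite /meshS mesh_split (mesh_tail a b (v := 2)) // /msum /src_a /tgt_a /= !(addr0, add0r) addrA.
Qed.

Lemma meshv a b v : (3 <= v < n)%N ->
  meshS a b v = b v.-1 * a v.-1 + (if (v < n.-1)%N then a v * b v else 0).
Proof.
move=> /andP [H3 Hv]; rewrite /meshS (big_cat_nat _ (n := v.-1)) //=; last by lia.
rewrite big_nat_cond big1 ?add0r; last first.
  move=> i /andP [/andP [_ Hi] _]; rewrite /src_a /tgt_a.
  have -> : (i == v) = false by apply/negbTE; lia.
  have -> : ((if (i <= 1)%N then 2%N else i.+1) == v) = false.
    by case: ifP => _; apply/negbTE; lia.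
  by rewrite addr0.
rewrite big_ltn; last by lia.
rewrite /src_a /tgt_a.
have -> : (v.-1 == v) = false by apply/negbTE; lia.
have -> : (v.-1 <= 1)%N = false by apply/negbTE; lia.
have -> : (v.-1.+1 == v) by apply/eqP; lia.
have -> : v.-1.+1 = v by lia.
rewrite add0r; congr (_ + _).
case: ifP => Hvn.
  rewrite big_ltn // eqxx.
  have -> : (v <= 1)%N = false by apply/negbTE; lia.
  have -> : (v.+1 == v) = false by apply/negbTE; lia.
  rewrite addr0 big_nat_cond big1 ?addr0 //.
  move=> i /andP [/andP [Hi _] _].
  have -> : (i == v) = false by apply/negbTE; lia.
  have -> : (i <= 1)%N = false by apply/negbTE; lia.
  have -> : (i.+1 == v) = false by apply/negbTE; lia.
  by rewrite addr0.
by rewrite big_geq //; lia.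
Qed.


Lemma chain (a b : nat -> A) : (forall v, (3 <= v < n)%N -> meshS a b v = 0) ->
  meshS a b 2 = 0 -> (b 0%N * a 0%N + b 1%N * a 1%N) ^+ (n - 2) = 0.
Proof.
move=> Hm H2.
have C : forall j i, (i + j = n - 2)%N -> (2 <= i)%N -> (a i * b i) ^+ j.+2 = 0.
  elim=> [|j IH] i Hij Hi.
    have := Hm i.+1; rewrite meshv; last by lia.
    have -> : (i.+1 < n.-1)%N = false by apply/negbTE; lia.
    rewrite addr0 /= => E; rewrite powab expr1 E; first by rewrite mulr0 mul0r.
    by lia.
  have := Hm i.+1; rewrite meshv; last by lia.
  have -> : (i.+1 < n.-1)%N by lia.
  move=> E'; have /eqP := E' ltac:(lia); rewrite addr_eq0 => /eqP E.
  by rewrite powab E exprNn (IH i.+1) ?mulr0 ?mul0r //; lia.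
move: H2; rewrite mesh2 => /eqP; rewrite addr_eq0 => /eqP ->.
rewrite exprNn.
have -> : (n - 2 = (n - 4).+2)%N by lia.
by rewrite (C (n - 4)%N 2%N) ?mulr0 //; lia.
Qed.


Definition xT : T := Mul (Ab K n 0%N) (Aa K n 0%N).
Definition yT : T := Mul (Ab K n 1%N) (Aa K n 1%N).
Definition pT : T := Mul xT (tpow (Mul yT xT) (n./2 - 2)).
Definition Pf (f : gen n -> A) := ev f pT.

Definition deform (f : gen n -> A) (c : A) (g : gen n) : A :=
  match g with
  | GA o => if val o == 1%N then Af f 1%N + c * (Af f 1%N * Pf f) else f g
  | GB o => if val o == 1%N then Bf f 1%N - c * (Pf f * Bf f 1%N) else f g
  | GE _ => f g
  end.

Lemma n1 : (1 < n.-1)%N. Proof. by lia. Qed.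

Lemma Ef_def f c v : Ef (deform f c) v = Ef f v.
Proof. by rewrite /Ef /Ev; case: insub. Qed.
Lemma Af_def f c i : i != 1%N -> Af (deform f c) i = Af f i.
Proof.
by move=> Hi; rewrite /Af /Aa; case: insubP => [o _ Ho|_] //=; rewrite Ho (negbTE Hi).
Qed.
Lemma Bf_def f c i : i != 1%N -> Bf (deform f c) i = Bf f i.
Proof.
by move=> Hi; rewrite /Bf /Ab; case: insubP => [o _ Ho|_] //=; rewrite Ho (negbTE Hi).
Qed.
Lemma Af_def1 f c : Af (deform f c) 1%N = Af f 1%N + c * (Af f 1%N * Pf f).
Proof. by rewrite {1}/Af /Aa insubT /= ?n1. Qed.
Lemma Bf_def1 f c : Bf (deform f c) 1%N = Bf f 1%N - c * (Pf f * Bf f 1%N).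
Proof. by rewrite {1}/Bf /Ab insubT /= ?n1. Qed.
Lemma Af_ordv f (i : 'I_n.-1) : Af f i = f (GA i).
Proof. by rewrite /Af Aa_ord. Qed.
Lemma Bf_ordv f (i : 'I_n.-1) : Bf f i = f (GB i).
Proof. by rewrite /Bf Ab_ord. Qed.

Lemma Pf_E f : Pf f = (Bf f 0%N * Af f 0%N) *
  ((Bf f 1%N * Af f 1%N) * (Bf f 0%N * Af f 0%N)) ^+ (n./2 - 2).
Proof. by rewrite /Pf /pT /= ev_tpow. Qed.


Lemma absR (e e' z : A) : e * e = e -> e' * z * e = z -> z * e = z.
Proof. by move=> He Hz; rewrite -{1}Hz -mulrA He Hz. Qed.
Lemma absL (e e' z : A) : e' * e' = e' -> e' * z * e = z -> e' * z = z.
Proof. by move=> He Hz; rewrite -{1}Hz !mulrA He Hz. Qed.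

Section QF.
Variable f : gen n -> A.
Hypothesis Hq : quivOK f.
Lemma qE v : Ef f v * Ef f v = Ef f v.
Proof.
rewrite /Ef /Ev; case: insubP => [o _ _|_] /=; last by rewrite mulr0.
by case: Hq => Q1 _ _ _; rewrite Q1 eqxx.
Qed.
Lemma qA i : (i < n.-1)%N -> Ef f (src_a i) * Af f i * Ef f (tgt_a i) = Af f i.
Proof.
move=> Hi; case: Hq => _ _ Q3 _.
by have := Q3 (Ordinal Hi); rewrite -Af_ordv.
Qed.
Lemma qB i : (i < n.-1)%N -> Ef f (tgt_a i) * Bf f i * Ef f (src_a i) = Bf f i.
Proof.
move=> Hi; case: Hq => _ _ _ Q4.
by have := Q4 (Ordinal Hi); rewrite -Bf_ordv.
Qed.
Local Notation e1 := (Ef f 1%N).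
Local Notation e2 := (Ef f 2%N).
Lemma a0e2 : Af f 0%N * e2 = Af f 0%N.
Proof. by apply: (absR (qE 2%N)); apply: (qA (i := 0%N)); lia. Qed.
Lemma e2b0 : e2 * Bf f 0%N = Bf f 0%N.
Proof. by apply: (absL (qE 2%N)); apply: (qB (i := 0%N)); lia. Qed.
Lemma a1e2 : Af f 1%N * e2 = Af f 1%N.
Proof. by apply: (absR (qE 2%N)); apply: (qA (i := 1%N)); lia. Qed.
Lemma e1a1 : e1 * Af f 1%N = Af f 1%N.
Proof. by apply: (absL (qE 1%N)); apply: (qA (i := 1%N)); lia. Qed.
Lemma e2b1 : e2 * Bf f 1%N = Bf f 1%N.
Proof. by apply: (absL (qE 2%N)); apply: (qB (i := 1%N)); lia. Qed.
Lemma b1e1 : Bf f 1%N * e1 = Bf f 1%N.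
Proof. by apply: (absR (qE 1%N)); apply: (qB (i := 1%N)); lia. Qed.
Lemma e2P : e2 * Pf f = Pf f.
Proof. by rewrite Pf_E !mulrA e2b0. Qed.
Lemma Pe2 : Pf f * e2 = Pf f.
Proof. by rewrite Pf_E commL -!mulrA a0e2. Qed.

Variable c : A.
Hypothesis cC : forall z, c * z = z * c.
Lemma cC2 (u v : A) : u * (c * v) = c * (u * v).
Proof. by rewrite mulrA -cC mulrA. Qed.

Lemma deform_quiv : quivOK (deform f c).
Proof.
case: Hq => Q1 Q2 Q3 Q4; split => // i.
- rewrite !Ef_def /=; case: (eqVneq (val i) 1%N) => [Hi|Hi]; last by apply: Q3.
  rewrite Hi /src_a /tgt_a /= mulrDr mulrDl e1a1 a1e2 cC2.
  by rewrite (mulrA (Ef f 1%N)) e1a1 -mulrA -mulrA Pe2.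
- rewrite !Ef_def /=; case: (eqVneq (val i) 1%N) => [Hi|Hi]; last by apply: Q4.
  rewrite Hi /src_a /tgt_a /= mulrBr mulrBl e2b1 b1e1 cC2.
  by rewrite (mulrA (Ef f 2%N)) e2P -mulrA -mulrA b1e1.
Qed.
End QF.


Definition satQ (f : gen n -> A) :=
  quivOK f /\ (forall v, (v < n)%N -> meshS (Af f) (Bf f) v = 0).
Definition rel2 (f : gen n -> A) :=
  Bf f 0%N * Af f 0%N + Bf f 1%N * Af f 1%N + Af f 2%N * Bf f 2%N +
  (Bf f 0%N * Af f 0%N * Bf f 1%N * Af f 1%N) ^+ (n./2 - 1).
Definition nilv (f : gen n -> A) := (Bf f 0%N * Af f 0%N + Bf f 1%N * Af f 1%N) ^+ (n - 2).
Definition satQs (f : gen n -> A) :=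
  [/\ quivOK f, (forall v, (v < n)%N -> v != 2%N -> meshS (Af f) (Bf f) v = 0),
      rel2 f = 0 & nilv f = 0].

Lemma satQ_of f : (forall r, In r (P_rels K n) -> ev f r = 0) -> satQ f.
Proof.
move=> H; split.
  by apply: quiv_complete => r Hr; apply: H; rewrite /P_rels In_cat; left.
move=> v Hv; rewrite -ev_mesh; apply: H; rewrite /P_rels In_cat; right.
by apply: (In_map2 (fun v => mesh K n v)); apply/In_mem; rewrite mem_iota.
Qed.
Lemma satQ_to f : satQ f -> forall r, In r (P_rels K n) -> ev f r = 0.
Proof.
case=> Hq Hm r; rewrite /P_rels In_cat; case=> [|H]; first exact: quiv_sound.
have [v [Hv ->]] := In_map H; rewrite ev_mesh; apply: Hm.
by move/In_mem: Hv; rewrite mem_iota.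
Qed.
Lemma satQs_of f : (forall r, In r (Pstar_rels K n) -> ev f r = 0) -> satQs f.
Proof.
rewrite /Pstar_rels => H; split.
- by apply: quiv_complete => r Hr; apply: H; rewrite In_cat; left.
- move=> v Hv Hv2; rewrite -ev_mesh; apply: H; rewrite In_cat; right; rewrite In_cat; left.
  apply: (In_map2 (fun v => mesh K n v)); apply: In_filter2 => //.
  by apply/In_mem; rewrite mem_iota.
- have H' := fun r Hr => H r (proj2 (In_cat _ _ _) (or_intror (proj2 (In_cat _ _ _) (or_intror Hr)))).
  have := H' _ (or_introl erefl).
  by rewrite /= ev_tpow.
- have H' := fun r Hr => H r (proj2 (In_cat _ _ _) (or_intror (proj2 (In_cat _ _ _) (or_intror Hr)))).
  have := H' _ (or_intror (or_introl erefl)).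
  by rewrite /= ev_tpow.
Qed.
Lemma satQs_to f : satQs f -> forall r, In r (Pstar_rels K n) -> ev f r = 0.
Proof.
case=> Hq Hm Hr Hnil r; rewrite /Pstar_rels In_cat; case=> [|]; first exact: quiv_sound.
rewrite In_cat; case=> [H|[<-|[<-|//]]].
- have [v [Hv ->]] := In_map H; rewrite ev_mesh.
  have [/In_mem Hv1 Hv2] := In_filter Hv; apply: Hm => //.
  by move: Hv1; rewrite mem_iota.
- by rewrite /= ev_tpow.
- by rewrite /= ev_tpow.
Qed.


Definition sigmaT (g : gen n) : T :=
  match g with
  | GA o => if val o == 1%N then Add (Aa K n 1%N) (Scale (- 2%:R^-1) (Mul (Aa K n 1%N) pT)) else Gen g
  | GB o => if val o == 1%N then Add (Ab K n 1%N) (Scale (2%:R^-1) (Mul pT (Ab K n 1%N))) else Gen g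
  | GE _ => Gen g
  end.
Definition tauT (g : gen n) : T :=
  match g with
  | GA o => if val o == 1%N then Add (Aa K n 1%N) (Scale (2%:R^-1) (Mul (Aa K n 1%N) pT)) else Gen g
  | GB o => if val o == 1%N then Add (Ab K n 1%N) (Scale (- 2%:R^-1) (Mul pT (Ab K n 1%N))) else Gen g
  | GE _ => Gen g
  end.

Section Main.
Variables (h : A) (hC : forall z, h * z = z * h) (hh : h + h = 1).
Hypothesis Hev : ~~ odd n.
Let k := (n./2 - 2)%N.
Lemma Hk1 : (n./2 - 1 = k.+1)%N.
Proof.
have := odd_double_half n; rewrite (negbTE Hev) add0n -muln2 /k => E; lia.
Qed.
Lemma Hk2 : (n - 2 = (k.+1).*2)%N.
Proof.
have := odd_double_half n; rewrite (negbTE Hev) add0n -!muln2 /k => E; lia.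
Qed.
Lemma hCN : forall z, - h * z = z * - h.
Proof. by move=> z; rewrite mulNr mulrN hC. Qed.

Section F.
Variable f : gen n -> A.
Local Notation a i := (Af f i).
Local Notation b i := (Bf f i).
Local Notation x := (b 0%N * a 0%N).
Local Notation y := (b 1%N * a 1%N).

Lemma XX : a 0%N * b 0%N = 0 -> x * x = 0.
Proof. by move=> H; rewrite -mulrA (mulrA (a 0%N)) H mul0r mulr0. Qed.
Lemma YY : a 1%N * b 1%N = 0 -> y * y = 0.
Proof. by move=> H; rewrite -mulrA (mulrA (a 1%N)) H mul0r mulr0. Qed.
Lemma PfE : Pf f = x * (y * x) ^+ k.
Proof. by rewrite Pf_E. Qed.
Lemma sigA : a 1%N + - h * (a 1%N * Pf f) = a 1%N - a 1%N * (h * Pf f).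
Proof. by rewrite mulNr (mulrA (a 1%N)) -hC mulrA. Qed.
Lemma sigB : b 1%N - - h * (Pf f * b 1%N) = b 1%N + (h * Pf f) * b 1%N.
Proof. by rewrite mulNr opprK mulrA. Qed.
Lemma tauA : a 1%N + h * (a 1%N * Pf f) = a 1%N + a 1%N * (h * Pf f).
Proof. by rewrite (mulrA (a 1%N)) -hC mulrA. Qed.
Lemma tauB : b 1%N - h * (Pf f * b 1%N) = b 1%N - (h * Pf f) * b 1%N.
Proof. by rewrite mulrA. Qed.
End F.

Lemma sigma_ok f : satQs f -> satQ (deform f (- h)).
Proof.
case=> Hq Hm Hr Hnil.
have A0B0 : Af f 0%N * Bf f 0%N = 0 by rewrite -mesh0; apply: Hm => //; lia.
have A1B1 : Af f 1%N * Bf f 1%N = 0 by rewrite -mesh1; apply: Hm => //; lia.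
have X2 := XX A0B0; have Y2 := YY A1B1.
have F2 := Hnil; rewrite /nilv Hk2 expand2 // in F2.
split; first by apply: deform_quiv => //; apply: hCN.
move=> v Hv.
case: (eqVneq v 1%N) => [->|v1].
  by rewrite mesh1 Af_def1 Bf_def1 sigA sigB; apply: (sig_ab hC X2 (PfE f) erefl A1B1).
case: (eqVneq v 2%N) => [->|v2].
  rewrite mesh2 (@Af_def f (-h) 0%N) // (@Af_def f (-h) 2%N) // (@Bf_def f (-h) 0%N) // (@Bf_def f (-h) 2%N) // Af_def1 Bf_def1 sigA sigB.
  rewrite (sig_ba hC hh X2 erefl (PfE f) F2 erefl erefl).
  move: Hr; rewrite /rel2 Hk1.
  have -> : Bf f 0%N * Af f 0%N * Bf f 1%N * Af f 1%N = Bf f 0%N * Af f 0%N * (Bf f 1%N * Af f 1%N)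
    by rewrite !mulrA.
  by move=> <-; rewrite -!addrA; congr (_ + _); rewrite [_ ^+ _ + _]addrC addrCA.
rewrite (meshC (a' := Af f) (b' := Bf f)) //; first by apply: Hm.
  by move=> j Hj; rewrite Af_def.
by move=> j Hj; rewrite Bf_def.
Qed.


Lemma satQ_F2 f : satQ f ->
  [/\ Af f 0%N * Bf f 0%N = 0, Af f 1%N * Bf f 1%N = 0, meshS (Af f) (Bf f) 2 = 0 &
   (Bf f 0%N * Af f 0%N * (Bf f 1%N * Af f 1%N)) ^+ k.+1 +
   (Bf f 1%N * Af f 1%N * (Bf f 0%N * Af f 0%N)) ^+ k.+1 = 0].
Proof.
case=> Hq Hm.
have A0B0 : Af f 0%N * Bf f 0%N = 0 by rewrite -mesh0; apply: Hm; lia.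
have A1B1 : Af f 1%N * Bf f 1%N = 0 by rewrite -mesh1; apply: Hm; lia.
have M2 : meshS (Af f) (Bf f) 2 = 0 by apply: Hm; lia.
split => //.
have := chain (fun v Hv => Hm v (proj2 (andP Hv))) M2.
by rewrite Hk2 expand2 //; [apply: XX | apply: YY].
Qed.

Lemma tau_ok f : satQ f -> satQs (deform f h).
Proof.
move=> HP; have [A0B0 A1B1 M2 F2] := satQ_F2 HP; case: HP => Hq Hm.
have X2 := XX A0B0; have Y2 := YY A1B1.
have Ey : Bf (deform f h) 1%N * Af (deform f h) 1%N =
   Bf f 1%N * Af f 1%N - (Bf f 0%N * Af f 0%N * (Bf f 1%N * Af f 1%N)) ^+ k.+1.
  by rewrite Af_def1 Bf_def1 tauA tauB (tau_ba hC hh X2 erefl (PfE f) F2 erefl erefl).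
split.
- by apply: deform_quiv => //; apply: hC.
- move=> v Hv v2; case: (eqVneq v 1%N) => [->|v1].
    by rewrite mesh1 Af_def1 Bf_def1 tauA tauB; apply: (tau_ab hC X2 (PfE f) erefl A1B1).
  rewrite (meshC (a' := Af f) (b' := Bf f)) //; first by apply: Hm.
    by move=> j Hj; rewrite Af_def.
  by move=> j Hj; rewrite Bf_def.
- rewrite /rel2 Hk1 (@Af_def f h 0%N) // (@Af_def f h 2%N) // (@Bf_def f h 0%N) //.
  rewrite (@Bf_def f h 2%N) // -(mulrA _ (Bf _ 1%N)) Ey.
  rewrite (@x_yt _ k _ (Bf f 1%N * Af f 1%N) X2 _ erefl).
  move: M2; rewrite mesh2 => M2.
  by rewrite -[in RHS]M2 addrA addrAC (addrAC _ (Af f 2%N * Bf f 2%N)) (addrAC (_ - _) (Bf f 1%N * Af f 1%N)) subrK.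
- rewrite /nilv Hk2 (@Af_def f h 0%N) // (@Bf_def f h 0%N) // Ey expand2 //; last first.
    exact: (@yt2 _ k _ _ X2 Y2 _ erefl F2).
  rewrite (@x_yt _ k _ (Bf f 1%N * Af f 1%N) X2 _ erefl).
  by rewrite (@yt_x _ k _ (Bf f 1%N * Af f 1%N) X2 _ erefl F2).
Qed.


Hypotheses (kcH : kc (2%:R^-1) = h) (kcHN : kc (- 2%:R^-1) = - h).

Lemma ev_sigma F g : ev F (sigmaT g) = deform F (- h) g.
Proof.
case: g => //= o; case: ifP => //= _; rewrite ?kcH ?kcHN //.
by rewrite mulNr opprK.
Qed.
Lemma ev_tau F g : ev F (tauT g) = deform F h g.
Proof.
case: g => //= o; case: ifP => //= _; rewrite ?kcH ?kcHN //.
by rewrite mulNr.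
Qed.

Lemma inv1 f : satQ f -> forall g, ev (fun g => ev f (tauT g)) (sigmaT g) = f g.
Proof.
move=> HP; have [A0B0 A1B1 M2 F2] := satQ_F2 HP.
have X2 := XX A0B0.
have ->: (fun g => ev f (tauT g)) = deform f h.
  by apply: functional_extensionality => g; apply: ev_tau.
have Ey : Bf (deform f h) 1%N * Af (deform f h) 1%N =
   Bf f 1%N * Af f 1%N - (Bf f 0%N * Af f 0%N * (Bf f 1%N * Af f 1%N)) ^+ k.+1.
  by rewrite Af_def1 Bf_def1 tauA tauB (tau_ba hC hh X2 erefl (PfE f) F2 erefl erefl).
have EP : Pf (deform f h) = Pf f.
  rewrite PfE (@Af_def f h 0%N) // (@Bf_def f h 0%N) // Ey.
  by rewrite (@yt_x _ k _ (Bf f 1%N * Af f 1%N) X2 _ erefl F2) -PfE.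
move=> g; rewrite ev_sigma; case: g => //= o; case: (eqVneq (val o) 1%N) => [Ho|Ho] //=.
- rewrite sigA EP Af_def1 tauA.
  by rewrite (sigtau_a hC X2 (PfE f) erefl) -Ho Af_ordv.
- rewrite sigB EP Bf_def1 tauB.
  by rewrite (sigtau_b hC X2 (PfE f) erefl) -Ho Bf_ordv.
Qed.

Lemma inv2 f : satQs f -> forall g, ev (fun g => ev f (sigmaT g)) (tauT g) = f g.
Proof.
case=> Hq Hm Hr Hnil.
have A0B0 : Af f 0%N * Bf f 0%N = 0 by rewrite -mesh0; apply: Hm => //; lia.
have A1B1 : Af f 1%N * Bf f 1%N = 0 by rewrite -mesh1; apply: Hm => //; lia.
have X2 := XX A0B0; have Y2 := YY A1B1.
have F2 := Hnil; rewrite /nilv Hk2 expand2 // in F2.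
have ->: (fun g => ev f (sigmaT g)) = deform f (- h).
  by apply: functional_extensionality => g; apply: ev_sigma.
have Ey : Bf (deform f (- h)) 1%N * Af (deform f (- h)) 1%N =
   Bf f 1%N * Af f 1%N + (Bf f 0%N * Af f 0%N * (Bf f 1%N * Af f 1%N)) ^+ k.+1.
  by rewrite Af_def1 Bf_def1 sigA sigB (sig_ba hC hh X2 erefl (PfE f) F2 erefl erefl).
have EP : Pf (deform f (- h)) = Pf f.
  rewrite PfE (@Af_def f (- h) 0%N) // (@Bf_def f (- h) 0%N) // Ey.
  by rewrite (@ys_x _ k _ (Bf f 1%N * Af f 1%N) X2 _ erefl F2) -PfE.
move=> g; rewrite ev_tau; case: g => //= o; case: (eqVneq (val o) 1%N) => [Ho|Ho] //=.
- rewrite tauA EP Af_def1 sigA.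
  by rewrite (tausig_a hC X2 (PfE f) erefl) -Ho Af_ordv.
- rewrite tauB EP Bf_def1 sigB.
  by rewrite (tausig_b hC X2 (PfE f) erefl) -Ho Bf_ordv.
Qed.

End Main.

End D.


Theorem mainTheorem13 (K : closedFieldType) (n : nat)
  (Hn : (4 <= n)%N) (Heven : ~~ odd n) (Hchar : (2%:R : K) != 0) :
  pres_iso (P_rels K n) (Pstar_rels K n).
Proof.
have half2 : (2%:R : K)^-1 + 2%:R^-1 = 1.
  by field.
set R1 := P_rels K n; set R2 := Pstar_rels K n.
set f1 := fun g => cl R1 (Gen g); set f2 := fun g => cl R2 (Gen g).
have S1 : satQ (kc R1) f1.
  apply: satQ_of; first exact: kcN1.
  by move=> r Hr; rewrite -cl_ev; apply: cl_rel.
have S2 : satQs (kc R2) f2.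
  apply: satQs_of; first exact: kcN1.
  by move=> r Hr; rewrite -cl_ev; apply: cl_rel.
have hC1 := kcC (R := R1) (2%:R^-1); have hC2 := kcC (R := R2) (2%:R^-1).
have hh1 : kc R1 (2%:R^-1) + kc R1 (2%:R^-1) = 1 by rewrite -kcD half2 kc1.
have hh2 : kc R2 (2%:R^-1) + kc R2 (2%:R^-1) = 1 by rewrite -kcD half2 kc1.
exists (@sigmaT K n), (@tauT K n); split.
- move=> r Hr; apply/cl_eq; rewrite cl_zero cl_ev ev_subst.
  have -> : (fun g => ev (kc R2) (fun g0 => cl R2 (Gen g0)) (@sigmaT K n g)) =
            deform (kc R2) f2 (- kc R2 (2%:R^-1)).
    by apply: functional_extensionality => g; apply: ev_sigma => //; rewrite kcN.
  apply: (satQ_to (kcN1 _)) Hr.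
  exact: (sigma_ok Hn hC2 hh2 Heven S2).
- move=> r Hr; apply/cl_eq; rewrite cl_zero cl_ev ev_subst.
  have -> : (fun g => ev (kc R1) (fun g0 => cl R1 (Gen g0)) (@tauT K n g)) =
            deform (kc R1) f1 (kc R1 (2%:R^-1)).
    by apply: functional_extensionality => g; apply: ev_tau => //; rewrite kcN.
  apply: (satQs_to (kcN1 _)) Hr.
  exact: (tau_ok Hn hC1 hh1 Heven S1).
- move=> g; apply/cl_eq; rewrite cl_ev ev_subst.
  by apply: (inv1 Hn hC1 hh1 Heven) => //; rewrite kcN.
- move=> g; apply/cl_eq; rewrite cl_ev ev_subst.
  by apply: (inv2 Hn hC2 hh2 Heven) => //; rewrite kcN.
Qed.
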